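(* Let $p\geq 1$ and let $A$ be a non-empty set. Then for each $g\in\ell^p(A)$, the set $$\Gamma_g:=\big\{f\in\ell^p(A):\ |f|\geq|g|\big\}$$ is not $\sigma$-porous in $\ell^p(A)$.
   Context: $\ell^p(A)$ is $L^p$ of $A$ with counting measure. Porosity: Let $X$ be a metric space and $0<\lambda<1$. A set $E\subseteq X$ is $\lambda$-porous at $x\in E$ if for each $\delta>0$ there is $y\in B(x;\delta)\setminus\{x\}$ with $B(y;\lambda\, d(x,y))\cap E=\varnothing$; $E$ is $\lambda$-porous if it is $\lambda$-porous at each of its points; $E$ is $\sigma$-$\lambda$-porous if it is a countable union of $\lambda$-porous subsets of $X$. A set is called $\sigma$-porous if it is $\sigma$-$\lambda$-porous for some $\lambda\in(0,1)$; ''not $\sigma$-porous'' means not $\sigma$-$\lambda$-porous for any $\lambda\in(0,1)$. *)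

(* Defs.v *)
From HB Require Import structures.
From mathcomp Require Import all_boot all_order all_algebra.
From mathcomp Require Import all_classical all_reals all_analysis.
Unset Printing Implicit Defensive.
Import Order.TTheory GRing.Theory Num.Theory.
Local Open Scope classical_set_scope.
Local Open Scope ring_scope.

Definition lp (R : realType) (p : R) (A : choiceType) : set (A -> R) :=
  [set f | (\esum_(a in [set: A]) (`|f a| `^ p)%:E < +oo)%E].

Arguments lp {R} p A.

Definition lpdist (R : realType) (p : R) (A : choiceType) (f g : A -> R) : R :=
  (fine (\esum_(a in [set: A]) (`|f a - g a| `^ p)%:E)) `^ (p^-1).

Arguments lpdist {R} p {A} f g.

Definition porous_at (R : realType) (p : R) (A : choiceType) (lam : R)
    (E : set (A -> R)) (x : A -> R) : Prop :=
  forall delta : R, 0 < delta ->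
    exists y : A -> R, [/\ lp p A y, lpdist p x y < delta, y <> x &
      forall z, lp p A z -> lpdist p y z < lam * lpdist p x y -> ~ E z].

Arguments porous_at {R} p {A} lam E x.

Definition porous (R : realType) (p : R) (A : choiceType) (lam : R)
    (E : set (A -> R)) : Prop :=
  forall x, E x -> porous_at p lam E x.

Arguments porous {R} p {A} lam E.

Definition sigma_porous (R : realType) (p : R) (A : choiceType) (lam : R)
    (E : set (A -> R)) : Prop :=
  exists En : nat -> set (A -> R),
    (forall n, En n `<=` lp p A) /\ (forall n, porous p lam (En n)) /\
    E = \bigcup_n En n.

Arguments sigma_porous {R} p {A} lam E.

Definition Gamma (R : realType) (p : R) (A : choiceType) (g : A -> R) : set (A -> R) :=
  [set f | lp p A f /\ forall a, `|g a| <= `|f a|].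

Arguments Gamma {R} p {A} g.

(* Main.v *)
Require Import Defs.
From HB Require Import structures.
From mathcomp Require Import all_boot all_order all_algebra.
From mathcomp Require Import all_classical all_reals all_analysis.
From mathcomp Require Import ring lra.
Import Order.TTheory GRing.Theory Num.Theory.
Local Open Scope classical_set_scope.
Local Open Scope ring_scope.

Module SL.
Import numFieldNormedType.Exports.
Lemma seq_lim (R : realType) (u : nat -> R) (r : nat -> R) :
  (forall k j, (k <= j)%N -> `|u j - u k| <= r k) ->
  (forall e, 0 < e -> exists k, r k < e) ->
  exists l : R, forall k, `|l - u k| <= r k.
Proof.
move=> H Hr.
have cu : cauchy (u @ \oo).
  apply: cauchy_exP => e e0; have [k rk] := Hr e e0.
  exists (u k); exists k => // n /= kn.
  rewrite /ball /=; rewrite distrC; exact: le_lt_trans (H _ _ kn) rk.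
have cv : cvgn u by apply: R_complete.
exists (lim (u @ \oo)) => k.
have : ([set y : R | u k - r k <= y] `&` [set y | y <= u k + r k]) (lim (u @ \oo)).
  apply: (closed_cvg _ _ _ _ cv).
  - by apply: closedI; [exact: closed_ge | exact: closed_le].
  - exists k => // n /= kn; move: (H _ _ kn); rewrite ler_norml => /andP[a b].
    split; rewrite /=; lra.
move=> [/= h1 h2]; rewrite ler_norml; apply/andP; split; lra.
Qed.

Lemma small_inv (R : realType) (e : R) (K : nat) : 0 < e ->
  exists k, (K <= k)%N /\ (k.+1%:R)^-1 <= e.
Proof.
move=> e0; have e1 : 0 <= e^-1 by rewrite invr_ge0 ltW.
have := archi_boundP e1.
set N := Num.Def.archi_bound _ => hN.
exists (maxn K N); split; first exact: leq_maxl.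
rewrite invf_ple ?posrE // ?ltr0Sn //.
apply: (le_trans (ltW hN)); rewrite ler_nat.
exact: leq_trans (leq_maxr K N) (leqnSn _).
Qed.

End SL.

Section L.
Variables (R : realType) (p : R) (A : choiceType).
Hypothesis hp : 1 <= p.

Let p0 : 0 < p. Proof. exact: lt_le_trans ltr01 hp. Qed.

Definition D (f g : A -> R) : \bar R :=
  \esum_(a in [set: A]) (`|f a - g a| `^ p)%:E.

Definition C : R := 2 `^ p.

Lemma C_gt0 : 0 < C. Proof. by rewrite powR_gt0. Qed.

Lemma pow_tri (u v : R) : `|u + v| `^ p <= C * (`|u| `^ p + `|v| `^ p).
Proof.
have key : forall a b : R, 0 <= a -> 0 <= b -> b <= a ->
    (a + b) `^ p <= C * (a `^ p + b `^ p).
  move=> a b a0 b0 ba.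
  apply: (@le_trans _ _ ((2 * a) `^ p)).
    apply: ge0_ler_powR; rewrite ?nnegrE ?addr_ge0 ?mulr_ge0 //; first exact: ltW.
    by rewrite mulr2n mulrDl mul1r lerD2l.
  rewrite powRM // ?ler0n // /C ler_pM2l ?powR_gt0 //.
  by rewrite lerDl powR_ge0.
apply: (@le_trans _ _ ((`|u| + `|v|) `^ p)).
  apply: ge0_ler_powR; rewrite ?nnegrE ?addr_ge0 //; first exact: ltW.
  exact: ler_normD.
have [uv|vu] := leP `|v| `|u|; first exact: key.
by rewrite addrC [X in C * X]addrC; apply: key => //; exact: ltW.
Qed.


Lemma esum_scale_set (S0 : set A) (F : A -> \bar R) (c : R) : (forall i, 0 <= F i)%E -> 0 <= c ->
  (\esum_(i in S0) (c%:E * F i) <= c%:E * \esum_(i in S0) F i)%E.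
Proof.
move=> F0 c0; apply: ge_ereal_sup => _ [X XT <-] /=.
rewrite -ge0_mule_fsumr //; apply: lee_wpmul2l; first by rewrite lee_fin.
by apply: ereal_sup_ubound; exists X.
Qed.

Lemma esum_scale (F : A -> \bar R) (c : R) : (forall i, 0 <= F i)%E -> 0 <= c ->
  (\esum_(i in [set: A]) (c%:E * F i) <= c%:E * \esum_(i in [set: A]) F i)%E.
Proof.
move=> F0 c0; apply: ge_ereal_sup => _ [X XT <-] /=.
rewrite -ge0_mule_fsumr //; apply: lee_wpmul2l; first by rewrite lee_fin.
by apply: ereal_sup_ubound; exists X.
Qed.

Lemma D_ge0 f g : (0 <= D f g)%E.
Proof. by apply: esum_ge0 => a _; rewrite lee_fin powR_ge0. Qed.

Lemma D_sym f g : D f g = D g f.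
Proof. by apply: eq_esum => a _; rewrite distrC. Qed.

Lemma D_refl f : D f f = 0%E.
Proof. by apply: esum1 => a _; rewrite subrr normr0 powR0 // gt_eqF. Qed.

Lemma D_term f g a : ((`|f a - g a| `^ p)%:E <= D f g)%E.
Proof.
apply: esum_ge; exists [set a]; first by split => //; exact: finite_set1.
by rewrite fsbig_set1.
Qed.

Lemma D_tri f g h : (D f h <= C%:E * (D f g + D g h))%E.
Proof.
apply: (@le_trans _ _ (\esum_(a in [set: A]) (C%:E *
    ((`|f a - g a| `^ p)%:E + (`|g a - h a| `^ p)%:E)))%E).
  apply: le_esum => a _; rewrite -EFinD -EFinM lee_fin.
  by have := pow_tri (f a - g a) (g a - h a); rewrite addrA subrK.
rewrite /D -esumD; last 2 first.
- by move=> a _; rewrite lee_fin powR_ge0.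
- by move=> a _; rewrite lee_fin powR_ge0.
apply: esum_scale; last exact/ltW/C_gt0.
by move=> a; rewrite -EFinD lee_fin addr_ge0 // powR_ge0.
Qed.

Lemma lpE f : lp p A f <-> (D f (fun=> 0%R) < +oo)%E.
Proof.
rewrite /lp /D /= (_ : \esum_(a in [set: A]) (`|f a - 0| `^ p)%:E =
  \esum_(a in [set: A]) (`|f a| `^ p)%:E)%E //.
by apply: eq_esum => a _; rewrite subr0.
Qed.

Lemma D_fin {f g} : lp p A f -> lp p A g -> D f g \is a fin_num.
Proof.
move=> /lpE lf /lpE lg; rewrite ge0_fin_numE ?D_ge0 //.
apply: (le_lt_trans (D_tri f (fun=> 0%R) g)).
rewrite D_sym in lg.
apply: lte_mul_pinfty; first by rewrite lee_fin (ltW C_gt0).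
  by [].
by rewrite lte_add_pinfty.
Qed.

Lemma powR_ltE (a b r : R) : 0 <= a -> 0 <= b -> 0 < r -> (a `^ r < b `^ r) = (a < b).
Proof.
move=> a0 b0 r0; apply/idP/idP => [|ab]; last by apply: gt0_ltr_powR.
apply: contraTT; rewrite -!leNgt => ba.
by apply: ge0_ler_powR => //; exact: ltW.
Qed.

Lemma powR_leE (a b r : R) : 0 <= a -> 0 <= b -> 0 < r -> (a `^ r <= b `^ r) = (a <= b).
Proof.
by move=> a0 b0 r0; rewrite !leNgt powR_ltE.
Qed.

Lemma powR_le (a b : R) : 0 <= a -> a <= b -> a `^ p <= b `^ p.
Proof.
move=> a0 ab; have hb : 0 <= b := le_trans a0 ab.
have hp0 : 0 <= p := ltW p0.
by apply: ge0_ler_powR; rewrite ?nnegrE.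
Qed.

Lemma powRK1 {d : R} : 0 <= d -> (d `^ p^-1) `^ p = d.
Proof. by move=> d0; rewrite -powRrM mulVf ?gt_eqF // powRr1. Qed.

Lemma powRK2 {d : R} : 0 <= d -> (d `^ p) `^ p^-1 = d.
Proof. by move=> d0; rewrite -powRrM mulfV ?gt_eqF // powRr1. Qed.

Lemma fineD_ge0 f g : 0 <= fine (D f g).
Proof. by apply: fine_ge0; exact: D_ge0. Qed.

Lemma lpdist_lt f g (d : R) : lp p A f -> lp p A g -> 0 <= d ->
  (lpdist p f g < d) = (fine (D f g) < d `^ p).
Proof.
move=> lf lg d0; rewrite /lpdist -[X in (_ < X)](powRK2 d0).
by rewrite powR_ltE ?invr_gt0 ?powR_ge0 ?fineD_ge0.
Qed.

Lemma D_finE {f g} : lp p A f -> lp p A g -> D f g = (fine (D f g))%:E.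
Proof. by move=> lf lg; rewrite fineK // D_fin. Qed.

Lemma hole_lt e y w (lam : R) : lp p A e -> lp p A y -> lp p A w -> 0 < lam ->
  fine (D y w) < lam `^ p * fine (D e y) ->
  lpdist p y w < lam * lpdist p e y.
Proof.
move=> le ly lw l0 H.
rewrite /lpdist -[X in X * _](powRK2 (ltW l0)) -powRM ?powR_ge0 ?fineD_ge0 //.
rewrite powR_ltE ?invr_gt0 ?mulr_ge0 ?powR_ge0 ?fineD_ge0 //.
Qed.

Lemma term_le f g a : lp p A f -> lp p A g -> `|f a - g a| `^ p <= fine (D f g).
Proof.
move=> lf lg; have := D_term f g a; rewrite (D_finE lf lg) lee_fin //.
Qed.

Lemma pow_lt_inv (u c : R) : 0 <= c -> `|u| `^ p < c `^ p -> `|u| < c.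
Proof. by move=> c0; rewrite powR_ltE. Qed.

Lemma D_le2 f g u u' v v' (c : R) : 0 <= c ->
  (forall a, `|f a - g a| `^ p <= c * (`|u a - u' a| `^ p + `|v a - v' a| `^ p)) ->
  (D f g <= c%:E * (D u u' + D v v'))%E.
Proof.
move=> c0 H; apply: (@le_trans _ _ (\esum_(a in [set: A]) (c%:E *
    ((`|u a - u' a| `^ p)%:E + (`|v a - v' a| `^ p)%:E)))%E).
  by apply: le_esum => a _; rewrite -EFinD -EFinM lee_fin.
rewrite /D -esumD; last 2 first.
- by move=> a _; rewrite lee_fin powR_ge0.
- by move=> a _; rewrite lee_fin powR_ge0.
apply: esum_scale => //.
by move=> a; rewrite -EFinD lee_fin addr_ge0 // powR_ge0.
Qed.

Lemma D_le1 f g u v (c : R) : 0 <= c ->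
  (forall a, `|f a - g a| `^ p <= c * `|u a - v a| `^ p) ->
  (D f g <= c%:E * D u v)%E.
Proof.
move=> c0 H; apply: (@le_trans _ _ (\esum_(a in [set: A]) (c%:E *
    ((`|u a - v a| `^ p)%:E)))%E).
  by apply: le_esum => a _; rewrite -EFinM lee_fin.
apply: esum_scale => // a; by rewrite lee_fin powR_ge0.
Qed.

Lemma lp_bound f g1 g2 : (forall a, `|f a| <= `|g1 a| + `|g2 a|) ->
  lp p A g1 -> lp p A g2 -> lp p A f.
Proof.
move=> H /lpE l1 /lpE l2; apply/lpE.
apply: (le_lt_trans (@D_le2 f (fun=> 0) g1 (fun=> 0) g2 (fun=> 0) C _ _)).
- exact: ltW C_gt0.
- move=> a /=; rewrite !subr0.
  apply: (@le_trans _ _ ((`|g1 a| + `|g2 a|) `^ p)).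
    by apply: powR_le; [exact: normr_ge0 | exact: H].
  by have := pow_tri `|g1 a| `|g2 a|; rewrite !normr_id ger0_norm ?addr_ge0.
apply: lte_mul_pinfty => //; first by rewrite lee_fin (ltW C_gt0).
by rewrite lte_add_pinfty.
Qed.

Lemma D_pos {f g} : lp p A f -> lp p A g -> f <> g -> 0 < fine (D f g).
Proof.
move=> lf lg fg.
have [a fa] : exists a, f a != g a.
  case: (pselect (exists a, f a != g a)) => // nex; exfalso; apply: fg.
  apply/funext => a; apply/eqP; apply/negPn/negP => h; apply: nex; by exists a.
apply: (lt_le_trans _ (@term_le f g a lf lg)).

by rewrite powR_gt0 // normr_gt0 subr_eq0.
Qed.

Lemma fsum_const {K : set A} : finite_set K ->
  exists N : R, 0 <= N /\ forall c : R, (\sum_(i \in K) c%:E <= (c * N)%:E)%E.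
Proof.
move=> fK; exists (\sum_(i \in K) (1 : R)); split.
  by apply: fsumr_ge0 => _ _; exact: ler01.
move=> c; rewrite fsumEFin // lee_fin mulr_fsumr.
by under [X in (_ <= X)]eq_fsbigr do rewrite mulr1.
Qed.

Lemma thresh t (W eps : R) : lp p A t -> (forall a, 0 <= t a) -> 1 <= W -> 0 < eps ->
  exists t1 : A -> R, exists m : R, [/\ 0 < m, lp p A t1, (forall a, t a <= t1 a),
     (forall a, W * t a <= t1 a \/ t a + m <= t1 a) & (D t1 t < eps%:E)%E].
Proof.
move=> lt t0 W1 e0.
pose F := fun a => (`|t a| `^ p)%:E.
have F0 : forall a, (0 <= F a)%E by move=> a; rewrite lee_fin powR_ge0.
have Sfin : \esum_(a in [set: A]) F a \is a fin_num.
  by rewrite ge0_fin_numE //; apply: esum_ge0 => a _; exact: F0.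
have W0 : 0 < W by exact: lt_le_trans ltr01 W1.
have Wp0 : 0 < W `^ p by rewrite powR_gt0.
pose e1 := eps / (2 * W `^ p).
have e1p : 0 < e1 by rewrite divr_gt0 // mulr_gt0.
have H : (\esum_(a in [set: A]) F a - e1%:E < \esum_(a in [set: A]) F a)%E.
  by rewrite lteBlDr // lteDl // lte_fin.
move/ereal_sup_gt: H => [_ [K [finK _] <-] HK].
have [N [N0 HN]] := fsum_const finK.
pose m := Num.min 1 (eps / (2 * (N + 1))).
have N1 : 0 < N + 1 by rewrite ltr_wpDl.
have m0 : 0 < m by rewrite lt_min ltr01 divr_gt0 // mulr_gt0.
have m1 : m <= 1 by rewrite ge_min lexx.
pose t1 := fun a => if a \in K then t a + m else W * t a.
have tt1 : forall a, t a <= t1 a.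
  move=> a; rewrite /t1; case: ifP => _; first by rewrite lerDl ltW.
  by rewrite ler_peMl.
have Dt : (D t1 t < eps%:E)%E.
  have fT : finite_set ([set: A] `&` K) by rewrite setTI.
  have B1 : (\esum_(a in [set: A] `&` K) (`|t1 a - t a| `^ p)%:E <= (m `^ p * N)%:E)%E.
    apply: (@le_trans _ _ (\esum_(a in [set: A] `&` K) (m `^ p)%:E)).
      apply: le_esum => a [_ Ka]; rewrite /t1 (mem_set Ka) addrAC subrr add0r.
      by rewrite ger0_norm ?(ltW m0).
    rewrite esum_fset //; last by move=> *; rewrite lee_fin powR_ge0.
    by rewrite setTI HN.
  have B2 : (\esum_(a in [set: A] `&` ~` K) (`|t1 a - t a| `^ p)%:E <=
      (W `^ p)%:E * \esum_(a in [set: A] `&` ~` K) F a)%E.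
    apply: (@le_trans _ _ (\esum_(a in [set: A] `&` ~` K) ((W `^ p)%:E * F a)%E)); last first.
      by apply: esum_scale_set => //; exact: ltW.
    apply: le_esum => a [_ nK]; rewrite /t1 memNset // /F -EFinM lee_fin -powRM ?(ltW W0) //.
    apply: powR_le => //; rewrite (ger0_norm (t0 a)).
    by rewrite ger0_norm ?subr_ge0 ?ler_peMl // gerBl.
  have Fs : (\esum_(a in [set: A]) F a = \sum_(x \in K) F x +
      \esum_(a in [set: A] `&` ~` K) F a)%E.
    rewrite (esumID K [set: A] (fun a => F a) (fun a _ => F0 a)).
    by congr (_ + _)%E; rewrite (esum_fset fT (fun i _ => F0 i)) ?setTI.
  set b := \esum_(a in [set: A] `&` ~` K) F a in Fs B2.
  set sK := (\sum_(x \in K) F x)%E in Fs HK.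
  have sK0 : (0 <= sK)%E by apply: fsume_ge0 => a _; exact: F0.
  have b0 : (0 <= b)%E by apply: esum_ge0 => a _; exact: F0.
  have Slt : (\esum_(a in [set: A]) F a < +oo)%E.
    by rewrite -ge0_fin_numE //; apply: esum_ge0 => a _; exact: F0.
  have sKf : sK \is a fin_num.
    rewrite ge0_fin_numE //; apply: (le_lt_trans _ Slt).
    by rewrite Fs; apply: leeDl.
  have bf : b \is a fin_num.
    rewrite ge0_fin_numE //; apply: (le_lt_trans _ Slt).
    by rewrite Fs; apply: leeDr.
  rewrite Fs -(fineK sKf) -(fineK bf) -EFinD lte_fin in HK.
  rewrite -(fineK bf) -EFinM in B2.
  have nn : forall a, [set: A] a -> (0 <= (`|t1 a - t a| `^ p)%:E)%E.
    by move=> a _; rewrite lee_fin powR_ge0.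
  rewrite /D (esumID K [set: A] (fun a => (`|t1 a - t a| `^ p)%:E) nn).
  apply: le_lt_trans (leeD B1 B2) _; rewrite -EFinD lte_fin.
  have hb : fine b < e1 by lra.
  have hWb : W `^ p * fine b < eps / 2.
    rewrite (_ : eps / 2 = W `^ p * e1); first by rewrite ltr_pM2l.
    by rewrite /e1; field; rewrite gt_eqF.
  have hm : m `^ p * N <= eps / 2.
    apply: (@le_trans _ _ (m * N)).
      by apply: ler_wpM2r => //; apply: ge1r_powR => //; rewrite m0 m1.
    apply: (@le_trans _ _ (eps / (2 * (N + 1)) * N)).
      by apply: ler_wpM2r => //; rewrite ge_min lexx orbT.
    rewrite (_ : eps / (2 * (N + 1)) * N = eps / 2 * (N / (N + 1))); last first.
      by field; rewrite gt_eqF.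
    rewrite ler_piMr ?divr_ge0 ?(ltW e0) //.
    by rewrite ler_pdivrMr // mul1r lerDl.
  lra.
exists t1, m; split => //.
- apply: (@lp_bound _ t (fun a => t1 a - t a)) => //.
    by move=> a; rewrite -[X in `|X|](subrK (t a)) addrC ler_normD.
  apply/lpE; rewrite (_ : D _ _ = D t1 t); first exact: lt_trans Dt (ltry _).
  by apply: eq_esum => a _; rewrite subr0.
- move=> a; rewrite /t1; case: ifP => _; [by right | by left].
Qed.

Definition d f g := fine (D f g).

Lemma d_ge0 f g : 0 <= d f g. Proof. exact: fineD_ge0. Qed.
Lemma d_sym f g : d f g = d g f. Proof. by rewrite /d D_sym. Qed.
Lemma d_refl f : d f f = 0. Proof. by rewrite /d D_refl. Qed.

Lemma d_tri {f g h} : lp p A f -> lp p A g -> lp p A h ->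
  d f h <= C * (d f g + d g h).
Proof.
move=> lf lg lh; have := D_tri f g h.
by rewrite (D_finE lf lh) (D_finE lf lg) (D_finE lg lh) -EFinD -EFinM lee_fin.
Qed.

Lemma d_le1 f g u v (c : R) : 0 <= c -> lp p A f -> lp p A g -> lp p A u -> lp p A v ->
  (forall a, `|f a - g a| `^ p <= c * `|u a - v a| `^ p) -> d f g <= c * d u v.
Proof.
move=> c0 lf lg lu lv H; have := @D_le1 f g u v c c0 H.
by rewrite (D_finE lf lg) (D_finE lu lv) -EFinM lee_fin.
Qed.

Lemma d_eq f g u v : (forall a, `|f a - g a| = `|u a - v a|) -> d f g = d u v.
Proof. by move=> H; rewrite /d /D; congr fine; apply: eq_esum => a _; rewrite H. Qed.

Lemma term_le_d {f g} a : lp p A f -> lp p A g -> `|f a - g a| `^ p <= d f g.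
Proof. exact: term_le. Qed.

Definition inF (t x : A -> R) := lp p A x /\ forall a, t a <= `|x a|.


Lemma proj_pt (ta ea ya W m : R) : 1 <= W -> 0 <= ta ->
  (W * ta <= `|ea| \/ ta + m <= `|ea|) -> `|ea - ya| < m ->
  let za := if ta <= `|ya| then ya else (if 0 <= ya then ta else - ta) in
  [/\ W * `|ya - za| <= `|ea - ya|, ta <= `|za| & `|za| <= `|ya| + ta].
Proof.
move=> W1 t0 He Hm za; rewrite /za.
have hn := lerB_dist ea ya.
case: ifP => hty.
  by rewrite subrr normr0 mulr0 normr_ge0 hty lerDl.
move/negbT: hty; rewrite -ltNge => hty.
case: ifP => hy.
  have hya : `|ya| = ya by rewrite ger0_norm.
  rewrite (ger0_norm t0) (ler0_norm (_ : ya - ta <= 0)); last by lra.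
  have hW : ya <= W * ya by rewrite ler_peMl.
  split; [|by []|by lra].
  rewrite mulrN mulrDr mulrN opprD opprK.
  case: He => He; lra.
move/negbT: hy; rewrite -ltNge => hy.
have hya : `|ya| = - ya by rewrite ltr0_norm.
rewrite normrN (ger0_norm t0) (ger0_norm (_ : 0 <= ya - - ta)); last by lra.
have hW : W * ya <= ya by rewrite ler_neMl // ltW.
split; [|by []|by lra].
rewrite mulrDr mulrN.
case: He => He; lra.
Qed.

Lemma C_ge1 : 1 <= C.
Proof.
apply: (@le_trans _ _ 2); first by rewrite ler1n.
by apply: le1r_powR => //; rewrite ler1n.
Qed.

Lemma step (E : set (A -> R)) (lam eps : R) :
  0 < lam -> porous p lam E -> 0 < eps ->
  forall t x rho, 0 < rho -> (forall a, 0 <= t a) -> lp p A t -> inF t x ->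
  exists t' x' rho', [/\ 0 < rho', rho' <= eps, (forall a, t a <= t' a), lp p A t' &
     inF t' x'] /\
     (forall w, lp p A w -> d x' w < rho' -> d x w < rho / (4 * C)) /\
     (forall w, inF t' w -> d x' w < rho' -> ~ E w).
Proof.
move=> l0 poE e0 t x rho r0 t0 lt [lx tx].
have C1 := C_ge1; have C0 := C_gt0.
pose R0 := rho / (4 * C).
have R00 : 0 < R0 by rewrite divr_gt0 // mulr_gt0.
pose tau := R0 / (8 * C ^+ 3).
have tau0 : 0 < tau by rewrite divr_gt0 // mulr_gt0 // exprn_gt0.
have tauR : 8 * C ^+ 3 * tau = R0 by rewrite /tau mulrC divfK // gt_eqF // mulr_gt0 // exprn_gt0.
have lp0 : 0 < lam `^ p by rewrite powR_gt0.
pose W := 2 * C / lam `^ p + 1.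
have W1 : 1 <= W by rewrite lerDr divr_ge0 // ?mulr_ge0 // ltW.
have Wp : 2 * C / lam `^ p <= W `^ p.
  apply: (@le_trans _ _ W); first by rewrite lerDl.
  exact: le1r_powR.
have [t1 [m [m0 lt1 tt1 Ht1 Dt1]]] := thresh t W tau lt t0 W1 tau0.
pose x1 := fun a => x a + (if 0 <= x a then t1 a - t a else t a - t1 a).
have nx1 : forall a, `|x1 a| = `|x a| + (t1 a - t a).
  move=> a; rewrite /x1; have := tt1 a; case: ifP => hx ht.
    by rewrite !ger0_norm // addr_ge0 // subr_ge0.
  move/negbT: hx; rewrite -ltNge => hx.
  have h1 : x a + (t a - t1 a) < 0 by lra.
  rewrite (ltr0_norm hx) (ltr0_norm h1); lra.
have t10 : forall a, 0 <= t1 a by move=> a; exact: le_trans (t0 a) (tt1 a).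
have lx1 : lp p A x1.
  apply: (@lp_bound _ x t1) => // a; rewrite nx1 lerD2l (ger0_norm (t10 a)).
  by rewrite gerBl.
have ix1 : inF t1 x1.
  split => // a; rewrite nx1; have := tx a; lra.
have dxx1 : d x x1 < tau.
  rewrite (@d_eq x x1 t1 t); last first.
    move=> a; rewrite /x1; have := tt1 a; case: ifP => _ ht.
      by rewrite opprD addrA subrr add0r normrN.
    by rewrite opprD addrA subrr add0r normrN distrC.
  by rewrite -lte_fin -(D_finE lt1 lt).
have two : forall u : R, 2 * u = u + u by move=> u; ring.
have C3 : C <= C ^+ 3.
  by rewrite exprS ler_peMr ?(ltW C0) // exprn_ege1.
have Rtau : C * (2 * tau) <= R0.
  rewrite -tauR mulrCA mulrA ler_wpM2r ?(ltW tau0) // mulrC.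
  have : C <= 4 * C ^+ 3.
    apply: (le_trans C3); rewrite ler_peMl ?exprn_ge0 ?(ltW C0) //.
    by rewrite ler1n.
  lra.
case: (pselect (exists e, [/\ E e, inF t1 e & d x1 e < tau])) => [[e [Ee [le te] dx1e]] | noE]; last first.
  exists t1, x1, (Num.min tau eps); split; [split => //|split].
  - by rewrite lt_min tau0 e0.
  - by rewrite ge_min lexx orbT.
  - move=> w lw hw; have := d_tri lx lx1 lw.
    have hw' : d x1 w < tau by apply: lt_le_trans hw _; rewrite ge_min lexx.
    have : C * (d x x1 + d x1 w) < C * (2 * tau) by rewrite (ltr_pM2l C0) two; exact: ltrD.
    move=> h1 h2; rewrite -/R0; apply: (le_lt_trans h2); exact: lt_le_trans h1 Rtau.
  - move=> w iw hw Ew; apply: noE; exists w; split => //.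
    by apply: lt_le_trans hw _; rewrite ge_min lexx.
pose dp := Num.min (m `^ p) (tau / 2).
have dp0 : 0 < dp by rewrite lt_min powR_gt0 // divr_gt0.
pose del := dp `^ p^-1.
have del0 : 0 < del by rewrite powR_gt0.
have [y [ly dey yne hole]] := poE e Ee del del0.
pose de := d e y.
have de0 : 0 < de by apply: D_pos => // ey; apply: yne.
have hde : de < dp.
  by rewrite -(powRK1 (ltW dp0)) -lpdist_lt // ltW.
pose z := fun a => if t a <= `|y a| then y a else (if 0 <= y a then t a else - t a).
have hz : forall a, [/\ W * `|y a - z a| <= `|e a - y a|, t a <= `|z a| & `|z a| <= `|y a| + t a].
  move=> a; apply: proj_pt => //.
  - have := te a; case: (Ht1 a) => H H'; [left|right]; exact: le_trans H H'.
  - apply: pow_lt_inv; first exact: ltW.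
    apply: le_lt_trans (term_le_d a le ly) _; apply: lt_le_trans hde _.
    by rewrite ge_min lexx.
have lz : lp p A z.
  apply: (@lp_bound _ y t) => // a; have [_ _ H] := hz a.
  by rewrite (ger0_norm (t0 a)).
have iz : inF t z by split => // a; have [_ -> _] := hz a.
pose k := (W `^ p)^-1.
have Wp0 : 0 < W `^ p by rewrite powR_gt0 // (lt_le_trans ltr01 W1).
have k0 : 0 < k by rewrite invr_gt0.
have Wp1 : 1 <= W `^ p := le_trans W1 (le1r_powR W1 hp).
have k1 : k <= 1 by rewrite /k invf_le1.
have Ck : C * k <= lam `^ p / 2.
  have hk : k <= (2 * C / lam `^ p)^-1.
    by rewrite /k lef_pV2 ?posrE // ?divr_gt0 ?mulr_gt0.
  apply: (@le_trans _ _ (C * (2 * C / lam `^ p)^-1)); first by rewrite ler_pM2l.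
  by rewrite le_eqVlt; apply/orP; left; apply/eqP; field; rewrite !gt_eqF.
have dyz : d y z <= k * de.
  rewrite d_sym [de]d_sym; apply: d_le1 => //; first exact: ltW.
  move=> a; have [H _ _] := hz a.
  rewrite /k ler_pdivlMl // -powRM ?(le_trans ler01 W1) // distrC [`|y a - e a|]distrC.
  by apply: powR_le => //; rewrite mulr_ge0 // (le_trans ler01 W1).
pose rho' := Num.min eps (Num.min tau (lam `^ p * de / (2 * C))).
have rho'0 : 0 < rho' by rewrite !lt_min e0 tau0 divr_gt0 // ?mulr_gt0.
have rt : rho' <= tau by rewrite /rho' !ge_min lexx orbT.
have rl : rho' <= lam `^ p * de / (2 * C) by rewrite /rho' !ge_min lexx !orbT.
exists t, z, rho'; split; [split => // | split].
- by rewrite /rho' ge_min lexx.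
- move=> w lw hw.
  have e1 : d x e <= C * (d x x1 + d x1 e) := d_tri lx lx1 le.
  have e2 : C * (d x x1 + d x1 e) < C * (2 * tau).
    by rewrite (ltr_pM2l C0) two; exact: ltrD dxx1 dx1e.
  have dp2 : dp <= tau / 2 by rewrite ge_min lexx orbT.
  have kde : k * de <= de by rewrite ler_piMl // ltW.
  have e3 : d e z <= C * (d e y + d y z) := d_tri le ly lz.
  have e4 : C * (d e y + d y z) < C * tau.
    rewrite (ltr_pM2l C0) [X in _ < X](splitr tau); change (de + d y z < tau / 2 + tau / 2).
    have hde2 : de < tau / 2 := lt_le_trans hde dp2.
    exact: ltrD hde2 (le_lt_trans (le_trans dyz kde) hde2).
  have e5 : d x z <= C * (d x e + d e z) := d_tri lx le lz.
  have e6 : C * (d x e + d e z) < C * (C * (2 * tau) + C * tau).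
    by rewrite (ltr_pM2l C0); exact: ltrD (le_lt_trans e1 e2) (le_lt_trans e3 e4).
  have e7 : d x w <= C * (d x z + d z w) := d_tri lx lz lw.
  have e8 : C * (d x z + d z w) < C * (C * (C * (2 * tau) + C * tau) + tau).
    by rewrite (ltr_pM2l C0); exact: ltrD (le_lt_trans e5 e6) (lt_le_trans hw rt).
  have e9 : C * tau <= C ^+ 3 * tau by rewrite ler_wpM2r // ltW.
  have e10 : C * (C * (C * (2 * tau) + C * tau) + tau) = 3 * (C ^+ 3 * tau) + C * tau.
    by rewrite !exprS expr0 mulr1; ring.
  rewrite -/R0 -tauR; apply: (le_lt_trans e7); apply: (lt_le_trans e8); rewrite e10.
  have e11 : 0 <= C ^+ 3 * tau by rewrite mulr_ge0 ?exprn_ge0 ?(ltW C0) ?(ltW tau0).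
  move: e9 e11; set u := C ^+ 3 * tau; set v := C * tau.
  rewrite -[8 * C ^+ 3 * tau]mulrA -/u.
  move=> e9 e11; clear -e9 e11; lra.
- move=> w [lw _] hw Ew; apply: (hole w lw _ Ew).
  apply: hole_lt => //; change (d y w < lam `^ p * de).
  have h1 := d_tri ly lz lw.
  have h2 : C * (d y z + d z w) < C * (k * de + lam `^ p * de / (2 * C)).
    by rewrite (ltr_pM2l C0); exact: ler_ltD dyz (lt_le_trans hw rl).
  have h3 : C * (k * de + lam `^ p * de / (2 * C)) = C * k * de + lam `^ p * de / 2.
    by field; rewrite gt_eqF.
  have h4 : C * k * de <= lam `^ p / 2 * de by rewrite ler_wpM2r // ltW.
  apply: (le_lt_trans h1); apply: (lt_le_trans h2); rewrite h3.
  rewrite [X in _ <= X](_ : lam `^ p * de = lam `^ p / 2 * de + lam `^ p * de / 2).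
    by rewrite lerD2r.
  by field.
Qed.

Lemma D_lim_bound (xk xl : A -> R) (xs : nat -> A -> R) (r : nat -> R) (J : nat) (B B' : R) :
  lp p A xk -> (forall j, lp p A (xs j)) -> 0 < B' ->
  (forall j, (J <= j)%N -> d xk (xs j) <= B) ->
  (forall a j, `|xl a - xs j a| <= r j) ->
  (forall e, 0 < e -> exists j, (J <= j)%N /\ r j <= e) ->
  (D xk xl <= (C * (B + B'))%:E)%E.
Proof.
move=> lk ls B'0 HB Hr Hre.
apply: ge_ereal_sup => _ [X [finX _] <-] /=.
have [N [N0 HN]] := fsum_const finX.
pose e := Num.min 1 (B' / (N + 1)).
have N1 : 0 < N + 1 by rewrite ltr_wpDl.
have e0 : 0 < e by rewrite lt_min ltr01 divr_gt0.
have e1 : e <= 1 by rewrite ge_min lexx.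
have [j [Jj rj]] := Hre e e0.
have C0 := C_gt0.
apply: (@le_trans _ _ (\sum_(i \in X) (C%:E * ((`|xk i - xs j i| `^ p)%:E +
    (e)%:E)))%E).
  apply: lee_fsum => // i _; rewrite -EFinD -EFinM lee_fin.
  apply: (le_trans (_ : _ <= C * (`|xk i - xs j i| `^ p + `|xs j i - xl i| `^ p))).
    by have := pow_tri (xk i - xs j i) (xs j i - xl i); rewrite addrA subrK.
  rewrite ler_pM2l // lerD2l.
  apply: (@le_trans _ _ (e `^ p)).
    apply: powR_le => //; rewrite distrC; exact: le_trans (Hr i j) rj.
  by apply: ge1r_powR => //; rewrite e0 e1.
rewrite -ge0_mule_fsumr; last by move=> i; rewrite -EFinD lee_fin addr_ge0 ?powR_ge0 ?ltW.
rewrite fsbig_split // EFinM; apply: lee_wpmul2l; first by rewrite lee_fin ltW.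
rewrite EFinD; apply: leeD.
  apply: (@le_trans _ _ (D xk (xs j))).
    by apply: ereal_sup_ubound; exists X.
  by rewrite (D_finE lk (ls j)) lee_fin; exact: HB.
apply: (le_trans (HN e)); rewrite lee_fin.
apply: (@le_trans _ _ (B' / (N + 1) * N)).
  by apply: ler_wpM2r => //; rewrite ge_min lexx orbT.
rewrite mulrAC ler_pdivrMr // ler_pM2l //.
by rewrite lerDl.
Qed.

Lemma core (g : A -> R) (lam : R) (En : nat -> set (A -> R)) :
  lp p A g -> 0 < lam -> (forall n, porous p lam (En n)) ->
  (forall f, lp p A f -> (forall a, `|g a| <= `|f a|) -> exists n, En n f) -> False.
Proof.
move=> hg l0 porE cover.
pose h := fun a => `|g a|.
have C0 := C_gt0.
pose Inv (s : (A -> R) * (A -> R) * R) :=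
  [/\ 0 < s.2, (forall a, h a <= s.1.1 a), lp p A s.1.1 & inF s.1.1 s.1.2].
pose epsn (n : nat) := ((n.+1%:R)^-1) `^ p.
pose Rel (n : nat) (s s' : (A -> R) * (A -> R) * R) :=
  [/\ (forall a, s.1.1 a <= s'.1.1 a), s'.2 <= epsn n,
      (forall w, lp p A w -> d s'.1.2 w < s'.2 -> d s.1.2 w < s.2 / (4 * C)) &
      (forall w, inF s'.1.1 w -> d s'.1.2 w < s'.2 -> ~ En n w)].
have hst : forall ns : nat * ((A -> R) * (A -> R) * R),
    exists s', Inv ns.2 -> Inv s' /\ Rel ns.1 ns.2 s'.
  case=> n [[t x] rho]; case: (pselect (Inv (t, x, rho))); last first.
    by move=> nI; exists (t, x, rho).
  move=> [/= r0 ht lt ix].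
  have t0 : forall a, 0 <= t a by move=> a; exact: le_trans (normr_ge0 _) (ht a).
  have ep0 : 0 < epsn n by rewrite powR_gt0 // invr_gt0 ltr0Sn.
  have [t' [x' [rho' [[r0' re tt' lt' ix'] [nest avoid]]]]] :=
    @step (En n) lam (epsn n) l0 (porE n) ep0 t x rho r0 t0 lt ix.
  exists (t', x', rho') => _; split; split => //=.
  by move=> a; exact: le_trans (ht a) (tt' a).
case: (choice hst) => f Hf.
pose s0 : (A -> R) * (A -> R) * R := (h, g, 1).
pose X := fix X (n : nat) : (A -> R) * (A -> R) * R :=
  if n is m.+1 then f (m, X m) else s0.
have lh : lp p A h by apply: (@lp_bound _ g g) => // a; rewrite /h normr_id lerDl.
have IX : forall n, Inv (X n).
  elim => [|n IH]; first by split => //=; split => // a; rewrite /h.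
  exact: (Hf (n, X n) IH).1.
have RX : forall n, Rel n (X n) (X n.+1) := fun n => (Hf (n, X n) (IX n)).2.
pose t n := (X n).1.1. pose x n := (X n).1.2. pose rho n := (X n).2.
have lx : forall n, lp p A (x n) by move=> n; have [_ _ _ []] := IX n.
have r0 : forall n, 0 < rho n by move=> n; have [] := IX n.
have q4 : forall r : R, 0 < r -> r / (4 * C) <= r.
  move=> r rp; rewrite ler_pdivrMr ?mulr_gt0 // ler_peMr ?(ltW rp) //.
  apply: (@le_trans _ _ (4 * 1)); first by rewrite mulr1 ler1n.
  by rewrite ler_pM2l ?ltr0n // C_ge1.
have tmono : forall k n a, t k a <= t (k + n)%N a.
  move=> k n a; elim: n => [|n IH]; first by rewrite addn0.
  apply: (le_trans IH); rewrite addnS; have [H _ _ _] := RX (k + n)%N; exact: H.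
have G : forall n k, d (x k) (x (k + n)%N) < rho k.
  elim => [|n IH] k; first by rewrite addn0 d_refl.
  have [_ _ nest _] := RX k.
  have := nest _ (lx _) (IH k.+1); rewrite addSnnS => hh.
  exact: lt_le_trans hh (q4 _ (r0 k)).
have G' : forall k j, (k < j)%N -> d (x k) (x j) < rho k / (4 * C).
  move=> k j kj; have [_ _ nest _] := RX k; apply: nest (lx _) _.
  by have := G (j - k.+1)%N k.+1; rewrite subnKC.
have rb : forall k, rho k.+1 <= epsn k by move=> k; have [_ ? _ _] := RX k.
have cauchy_a : forall a k j, (k <= j)%N -> `|x j.+1 a - x k.+1 a| <= (k.+1%:R)^-1.
  move=> a k j kj; apply: ltW; apply: pow_lt_inv; first by rewrite invr_ge0 ler0n.
  rewrite distrC; apply: le_lt_trans (term_le_d a (lx _) (lx _)) _.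
  have := G (j - k)%N k.+1; rewrite addSn subnKC // => hh.
  exact: lt_le_trans hh (rb k).
have lim_a : forall a, exists l : R, forall k, `|l - x k.+1 a| <= (k.+1%:R)^-1.
  move=> a; apply: (@SL.seq_lim R (fun k => x k.+1 a) (fun k => (k.+1%:R)^-1) (cauchy_a a)) => e e0.
  have [k [_ hk]] := @SL.small_inv R (e / 2) 0%N (divr_gt0 e0 (ltr0n _ 2)).
  by exists k; apply: le_lt_trans hk _; rewrite ltr_pdivrMr ?ltr0n // ltr_pMr ?ltr1n.
case: (choice lim_a) => xl Hxl.
have tl : forall k a, t k a <= `|xl a|.
  move=> k a; apply/ler_addgt0Pr => e e0.
  have [j [kj je]] := @SL.small_inv R e k e0.
  have kj1 : (k <= j.+1)%N by apply: leq_trans kj (leqnSn _).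
  have h1 := tmono k (j.+1 - k)%N a; rewrite subnKC // in h1.
  have [_ _ _ [_ h2]] := IX j.+1.
  have h3 : `|x j.+1 a| <= `|xl a| + `|x j.+1 a - xl a|.
    by rewrite -[X in `|X| <= _](subrK (xl a)) addrC ler_normD.
  have h4 : `|x j.+1 a - xl a| <= e by rewrite distrC; exact: le_trans (Hxl a j) je.
  apply: (le_trans h1); apply: (le_trans (h2 a)); apply: (le_trans h3).
  by rewrite lerD2l.
have Dk : forall k, (D (x k) xl <= (rho k / 2)%:E)%E.
  move=> k; have B0 : 0 < rho k / (4 * C) by rewrite divr_gt0 ?mulr_gt0.
  have := @D_lim_bound (x k) xl (fun j => x j.+1) (fun j => (j.+1%:R)^-1) k
    (rho k / (4 * C)) (rho k / (4 * C)) (lx k) (fun j => lx j.+1) B0.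
  have e1 : C * (rho k / (4 * C) + rho k / (4 * C)) = rho k / 2.
    by field; rewrite gt_eqF.
  rewrite e1; apply.
  - by move=> j kj; apply: ltW; apply: G'.
  - by move=> a j; exact: Hxl.
  - by move=> e e0; exact: (@SL.small_inv R e k e0).
have lxl : lp p A xl.
  apply/lpE; apply: (le_lt_trans (D_tri xl (x 0%N) (fun=> 0%R))).
  apply: lte_mul_pinfty; first by rewrite lee_fin ltW.
    by [].
  rewrite lte_add_pinfty //; first by rewrite D_sym; exact: le_lt_trans (Dk 0%N) (ltry _).
  by have := lx 0%N; move/lpE.
have dk : forall k, d (x k) xl < rho k.
  move=> k; have := Dk k; rewrite (D_finE (lx k) lxl) lee_fin => hh.
  by apply: le_lt_trans hh _; rewrite ltr_pdivrMr ?ltr0n // ltr_pMr ?ltr1n.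
have [n Enx] : exists n, En n xl.
  apply: cover => // a; have [_ hh _ _] := IX 0%N; exact: le_trans (hh a) (tl 0%N a).
have [_ _ _ avoid] := RX n.
by apply: (avoid xl) Enx; [split => //; exact: tl | exact: dk].
Qed.

End L.

Theorem corollary2p6 (R : realType) (p : R) (A : choiceType)
    (hp : 1 <= p) (hA : [set: A] !=set0) (g : A -> R) (hg : lp p A g) :
  forall lam : R, 0 < lam < 1 -> ~ sigma_porous p lam (Gamma p g).
Proof.
move=> lam /andP[l0 _] [En [_ [porE Eeq]]].
apply: (@core R p A hp g lam En hg l0 porE) => f lf hf.
have : Gamma p g f by split.
by rewrite Eeq => -[n _ Enf]; exists n.
Qed.
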